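(* Let $\mathcal{M}=(S,E,T)$ be a trivially parametric Markov chain satisfying the standing assumptions below. Then there exists a finest valuation for $\mathcal{M}$, i.e. a graph-preserving valuation $\mathsf{val}$ such that for all $u,v\in S$, $P_{\mathsf{val}}(u)=P_{\mathsf{val}}(v)$ if and only if $u\sim v$.
   Context: A trivially parametric Markov chain $\mathcal{M}=(S,E,T)$ consists of a finite set of states $S$, targets $T=\{\mathit{fin},\mathit{fail}\}$ with no outgoing edges, and edges $E\subseteq(S\setminus T)\times S$. A graph-preserving valuation assigns to each non-target $s$ a full-support probability distribution on its successor set $sE$; $P_{\mathsf{val}}(s)$ is the probability of reaching $\mathit{fin}$ from $s$ in the resulting Markov chain. $u\sim v$ iff $P_{\mathsf{val}}(u)=P_{\mathsf{val}}(v)$ for every graph-preserving valuation. Standing assumptions: the equivalence classes of $\mathit{fin}$ and $\mathit{fail}$ are $\{\mathit{fin}\}$ and $\{\mathit{fail}\}$; no state has a self-loop; every non-target state has exactly two successors. *)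

(* Defs.v *)
From HB Require Import structures.
From mathcomp Require Import all_boot all_order all_algebra.
From mathcomp Require Import all_classical all_reals all_analysis.
Set Implicit Arguments. Unset Strict Implicit. Unset Printing Implicit Defensive.
Import Order.TTheory GRing.Theory Num.Theory.
Import numFieldNormedType.Exports.
Local Open Scope ring_scope.

Section TPMC.
Variables (R : realType) (S : finType) (E : rel S) (sfin sfail : S).

Definition is_target (s : S) : bool := (s == sfin) || (s == sfail).

Definition graph_preserving (val : S -> S -> R) : Prop :=
  forall s, ~~ is_target s ->
    [/\ forall t, E s t -> 0 < val s t,
        forall t, ~~ E s t -> val s t = 0
      & \sum_(t : S) val s t = 1].

Fixpoint reach_within (val : S -> S -> R) (n : nat) (s : S) : R :=
  match n with
  | 0 => if s == sfin then 1 else 0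
  | n'.+1 => if s == sfin then 1 else if s == sfail then 0
             else \sum_(t : S) val s t * reach_within val n' t
  end.

Definition Pval (val : S -> S -> R) (s : S) : R :=
  limn (fun n => reach_within val n s).

Definition mc_equiv (u v : S) : Prop :=
  forall val, graph_preserving val -> Pval val u = Pval val v.

End TPMC.

(* Main.v *)
Require Import Defs.
From HB Require Import structures.
From mathcomp Require Import all_boot all_order all_algebra.
From mathcomp Require Import all_classical all_reals all_analysis.
From mathcomp Require Import ring.
Import Order.TTheory GRing.Theory Num.Theory.
Import numFieldNormedType.Exports.
Set Implicit Arguments. Unset Strict Implicit.
Local Open Scope ring_scope.

Section Basic.
Variables (R : realType) (S : finType) (E : rel S) (sfin sfail : S).
Variable val : S -> S -> R.
Hypothesis gp : graph_preserving E sfin sfail val.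
Hypothesis fin_fail : sfin != sfail.

Local Notation r := (reach_within sfin sfail val).
Local Notation tgt := (is_target sfin sfail).

Lemma val_ge0 s t : ~~ tgt s -> 0 <= val s t.
Proof.
move=> /gp [h1 h2 _]; case: (boolP (E s t)) => h; first exact: ltW (h1 _ h).
by rewrite h2.
Qed.

Lemma sum_val s : ~~ tgt s -> \sum_t val s t = 1.
Proof. by move=> /gp []. Qed.

Lemma rw_ge0 n s : 0 <= r n s.
Proof.
elim: n s => [|n IH] s /=; first by case: ifP.
case: ifP => // hfin; case: ifP => // hfail.
have nt : ~~ tgt s by rewrite /is_target hfin hfail.
by apply: sumr_ge0 => t _; apply: mulr_ge0; [exact: val_ge0|exact: IH].
Qed.

Lemma rw_le1 n s : r n s <= 1.
Proof.
elim: n s => [|n IH] s /=; first by case: ifP.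
case: ifP => // hfin; case: ifP => // hfail.
have nt : ~~ tgt s by rewrite /is_target hfin hfail.
rewrite -(sum_val nt); apply: ler_sum => t _.
by rewrite -{2}(mulr1 (val s t)); apply: ler_wpM2l; [exact: val_ge0|exact: IH].
Qed.

Lemma rw_mono n s : r n s <= r n.+1 s.
Proof.
elim: n s => [|n IH] s.
  rewrite /=; case: ifP => // hfin; case: ifP => // hfail.
  have nt : ~~ tgt s by rewrite /is_target hfin hfail.
  by apply: sumr_ge0 => t _; apply: mulr_ge0; [exact: val_ge0|case: ifP].
rewrite [r n.+1 s]/= [r n.+2 s]/=.
case: ifP => // hfin; case: ifP => // hfail.
have nt : ~~ tgt s by rewrite /is_target hfin hfail.
apply: ler_sum => t _; apply: ler_wpM2l; [exact: val_ge0|exact: IH].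
Qed.

Lemma rw_cvg s : ((fun n => r n s) @ \oo --> Pval sfin sfail val s)%classic.
Proof.
have h : ((fun n => r n s) @ \oo --> sup (range (fun n => r n s)))%classic.
  apply: nondecreasing_cvgn.
    by apply/nondecreasing_seqP => n; exact: rw_mono.
  by exists 1 => _ [n _ <-]; exact: rw_le1.
by rewrite /Pval (cvg_lim _ h).
Qed.

Lemma Pval_fin : Pval sfin sfail val sfin = 1.
Proof.
rewrite /Pval; have -> : (fun n => r n sfin) = (fun _ => 1).
  by apply/funext => -[|n] /=; rewrite eqxx.
exact: lim_cst.
Qed.

Lemma Pval_fail : Pval sfin sfail val sfail = 0.
Proof.
rewrite /Pval; have -> : (fun n => r n sfail) = (fun _ => 0).
  by apply/funext => -[|n] /=; rewrite eq_sym (negbTE fin_fail) ?eqxx.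
exact: lim_cst.
Qed.

Lemma Pval_eq s : ~~ tgt s ->
  Pval sfin sfail val s = \sum_t val s t * Pval sfin sfail val t.
Proof.
move=> nt.
have [hfin hfail] : (s == sfin) = false /\ (s == sfail) = false.
  by move: nt; rewrite /is_target negb_or => /andP [/negbTE -> /negbTE ->].
have h1 : ((fun n => r n.+1 s) @ \oo --> Pval sfin sfail val s)%classic.
  by rewrite (cvg_shiftS (fun n => r n s)); exact: rw_cvg.
have h2 : ((fun n => r n.+1 s) @ \oo --> \sum_t val s t * Pval sfin sfail val t)%classic.
  have -> : (fun n => r n.+1 s) = (fun n => \sum_t val s t * r n t).
    by apply/funext => n /=; rewrite hfin hfail.
  apply: (@cvg_big _ _ +%R 0 xpredT add_continuous).
  move=> t _; apply: cvgMl_tmp; exact: rw_cvg.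
exact: (cvg_unique _ h1 h2).
Qed.

End Basic.
Section Uniq.
Variables (R : realType) (S : finType) (E : rel S) (sfin sfail : S).
Variable val : S -> S -> R.
Hypothesis gp : graph_preserving E sfin sfail val.
Hypothesis conn : forall s, s != sfail -> connect E s sfin.
Local Notation tgt := (is_target sfin sfail).

Lemma max_le0 (d : S -> R) : d sfin = 0 -> d sfail = 0 ->
  (forall s, ~~ tgt s -> d s = \sum_t val s t * d t) -> forall s, d s <= 0.
Proof.
move=> dfin dfail deq.
have [s0 _ hmax] := @arg_maxP _ R S sfin xpredT d isT.
set m := d s0 in hmax *.
move=> s; apply: (le_trans (hmax s isT)); rewrite leNgt; apply/negP => m0.
have ntm x : d x = m -> ~~ tgt x.
  move=> dx; rewrite /is_target; apply/negP => /orP [] /eqP ex; move: dx;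
  by rewrite ex ?dfin ?dfail => m0'; move: m0; rewrite -m0' ltxx.
have clo x y : d x = m -> E x y -> d y = m.
  move=> dx exy; have nt := ntm x dx.
  have [hpos _ hsum] := gp nt.
  have h0 : \sum_t val x t * (m - d t) == 0.
    under eq_bigr do rewrite mulrBr.
    by rewrite sumrB -mulr_suml hsum mul1r -deq // dx subrr.
  have hnn : forall t, true -> 0 <= val x t * (m - d t).
    move=> t _; case: (boolP (E x t)) => et.
      by apply: mulr_ge0; [exact: ltW (hpos t et)| rewrite subr_ge0; exact: hmax].
    by have [_ h2 _] := gp nt; rewrite h2 ?mul0r.
  have h0q : \sum_t val x t * (m - d t) = 0 by apply/eqP.
  have := @psumr_eq0P _ _ _ _ hnn h0q y isT.
  move/eqP; rewrite mulf_eq0 => /orP [/eqP e|].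
    by move: (hpos y exy); rewrite e ltxx.
  by rewrite subr_eq0 => /eqP ->.
have s0f : s0 != sfail by apply/negP => /eqP e; move: (ntm s0 erefl); rewrite e /is_target eqxx orbT.
have /connectP [p pth lst] := conn s0f.
have pl : forall q x, d x = m -> path E x q -> d (last x q) = m.
  elim=> [|y q IH] x //= dx /andP [exy pth2].
  by apply: IH pth2; apply: clo exy.
have := pl p s0 erefl pth.
by rewrite -lst dfin => m00; move: m0; rewrite -m00 ltxx.
Qed.

Lemma uniq_sol (d : S -> R) : d sfin = 0 -> d sfail = 0 ->
  (forall s, ~~ tgt s -> d s = \sum_t val s t * d t) -> forall s, d s = 0.
Proof.
move=> dfin dfail deq s; apply/eqP; rewrite eq_le max_le0 //=.
rewrite -oppr_le0; apply: (@max_le0 (fun x => - d x)); rewrite ?dfin ?dfail ?oppr0 //.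
by move=> x nt; rewrite deq // -sumrN; apply: eq_bigr => t _; rewrite mulrN.
Qed.

End Uniq.
Section Mat.
Variables (R : realType) (S : finType) (E : rel S) (sfin sfail : S).
Local Notation tgt := (is_target sfin sfail).
Local Notation n := #|S|.
Local Notation ev := (fun i : 'I_n => (enum_val i : S)).

Definition Amat (val : S -> S -> R) : 'M[R]_n :=
  \matrix_(i, j) (if tgt (ev j) then 0 else val (ev j) (ev i)).
Definition bvec : 'rV[R]_n := \row_j (if ev j == sfin then 1 else 0).

Lemma sum_ev (F : S -> R) : \sum_(i < n) F (ev i) = \sum_t F t.
Proof. by rewrite (big_enum_val F). Qed.

Lemma test (x : 'rV[R]_n) (val : S -> S -> R) j :
  (x *m Amat val) 0 j = if tgt (ev j) then 0 else \sum_t val (ev j) t * x 0 (enum_rank t).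
Proof.
rewrite mxE; case: ifP => h.
  by apply: big1 => i _; rewrite mxE h mulr0.
rewrite -sum_ev; apply: eq_bigr => i _; rewrite mxE h enum_valK mulrC //.
Qed.


Lemma Amat_row (x : 'rV[R]_n) val :
  x *m (1%:M - Amat val) = \row_j (x 0 j - (if tgt (ev j) then 0 else
      \sum_t val (ev j) t * x 0 (enum_rank t))).
Proof.
have e : forall (A B : 'rV[R]_n) k, (A - B) 0 k = A 0 k - B 0 k by move=> A B k; rewrite !mxE.
by apply/matrixP => i j; rewrite ord1 mulmxBr mulmx1 e test mxE.
Qed.

Hypothesis fin_fail : sfin != sfail.
Hypothesis conn : forall s, s != sfail -> connect E s sfin.

Lemma sol_Pval val : graph_preserving E sfin sfail val ->
  (\row_j Pval sfin sfail val (ev j)) *m (1%:M - Amat val) = bvec.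
Proof.
move=> gp; rewrite Amat_row; apply/matrixP => i j; rewrite !mxE.
case: ifP => ht.
  rewrite subr0; move: ht; rewrite /is_target => /orP [] /eqP ->.
    by rewrite eqxx Pval_fin.
  by rewrite eq_sym (negbTE fin_fail) Pval_fail.
have -> : (enum_val j == sfin) = false by move: ht; rewrite /is_target; case: (_ == sfin).
rewrite (Pval_eq gp (negbT ht)); apply/eqP; rewrite subr_eq0; apply/eqP.
by apply: eq_bigr => t _; rewrite mxE enum_rankK.
Qed.

Lemma det_neq0 val : graph_preserving E sfin sfail val ->
  \det (1%:M - Amat val) != 0.
Proof.
move=> gp; apply/det0P => -[v vn0 vA]; move/negP: vn0; apply.
rewrite Amat_row in vA.
pose d s := v 0 (enum_rank s).
have hv j : v 0 j - (if tgt (ev j) then 0 else \sum_t val (ev j) t * d t) = 0.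
  by move/matrixP: vA => /(_ 0 j); rewrite !mxE.
have dz : forall s, d s = 0.
  apply: (uniq_sol gp conn).
  - by have := hv (enum_rank sfin); rewrite enum_rankK /is_target eqxx subr0.
  - by have := hv (enum_rank sfail); rewrite enum_rankK /is_target eqxx orbT subr0.
  - move=> s nt; have := hv (enum_rank s); rewrite enum_rankK (negbTE nt).
    by move/eqP; rewrite subr_eq0 => /eqP.
apply/eqP/matrixP => i j; rewrite ord1 mxE.
by have := dz (ev j); rewrite /d enum_valK.
Qed.

End Mat.

Section Poly.
Variables (R : realType) (S : finType) (E : rel S) (sfin sfail : S).
Local Notation tgt := (is_target sfin sfail).
Local Notation n := #|S|.
Local Notation ev := (fun i : 'I_n => (enum_val i : S)).
Hypothesis fin_fail : sfin != sfail.
Hypothesis conn : forall s, s != sfail -> connect E s sfin.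
Variables vl0 vl1 : S -> S -> R.

Definition vt (t : R) : S -> S -> R := fun a b => vl0 a b + t * (vl1 a b - vl0 a b).

Definition NX : 'M[{poly R}]_n :=
  \matrix_(i, j) ((i == j)%:R - (if tgt (ev j) then 0 else
     (vl0 (ev j) (ev i))%:P + 'X * (vl1 (ev j) (ev i) - vl0 (ev j) (ev i))%:P)).

Definition qpol (w : S) : {poly R} :=
  ((map_mx polyC (@bvec R S sfin)) *m \adj NX) 0 (enum_rank w).

Lemma NX_eval t : map_mx (horner_eval t) NX = 1%:M - Amat sfin sfail (vt t).
Proof.
apply/matrixP => i j; rewrite !mxE /horner_eval; case: ifP => _.
  by rewrite !subr0; case: (i == j); rewrite /= ?horner0 ?hornerC ?horner1.
rewrite hornerD hornerN hornerD hornerM hornerX !hornerC /vt.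
by case: (i == j); rewrite /= ?horner0 ?hornerC ?horner1.
Qed.

Lemma key t : graph_preserving E sfin sfail (vt t) ->
  (\det NX).[t] != 0 /\
  forall w, Pval sfin sfail (vt t) w * (\det NX).[t] = (qpol w).[t].
Proof.
move=> gp.
have hd := det_neq0 conn gp.
rewrite -NX_eval det_map_mx in hd.
split => // w.
have := sol_Pval fin_fail gp.
rewrite -NX_eval => /(congr1 (fun M => M *m \adj (map_mx (horner_eval t) NX))).
rewrite -mulmxA mul_mx_adj det_map_mx mul_mx_scalar -map_mx_adj.
have -> : @bvec R S sfin = map_mx (horner_eval t) (map_mx polyC (@bvec R S sfin)).
  by apply/matrixP => i j; rewrite !mxE /horner_eval hornerC.
rewrite -map_mxM => /matrixP /(_ 0 (enum_rank w)).
rewrite [in X in X = _]mxE [in X in X = _]mxE [in X in _ = X]mxE enum_rankK /horner_eval => h.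
by rewrite mulrC; exact: h.
Qed.

End Poly.

Lemma gp_vt (R : realType) (S : finType) (E : rel S) (sfin sfail : S) vl0 vl1 (t : R) :
  graph_preserving E sfin sfail vl0 -> graph_preserving E sfin sfail vl1 ->
  0 <= t <= 1 -> graph_preserving E sfin sfail (vt vl0 vl1 t).
Proof.
move=> g0 g1 /andP [t0 t1] s nt.
have [p0 z0 s0] := g0 s nt; have [p1 z1 s1] := g1 s nt.
split.
- move=> x ex; rewrite /vt; have a := p0 x ex; have b := p1 x ex.
  have -> : vl0 s x + t * (vl1 s x - vl0 s x) = (1 - t) * vl0 s x + t * vl1 s x by ring.
  case: (ltrP t 1) => ht.
    by apply: ltr_pwDl; [apply: mulr_gt0; rewrite // subr_gt0|apply: mulr_ge0 => //; exact: ltW].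
  have -> : t = 1 by apply/eqP; rewrite eq_le t1 ht.
  by rewrite subrr mul0r add0r mul1r.
- by move=> x ex; rewrite /vt z0 ?z1 // subrr mulr0 addr0.
- by rewrite /vt big_split /= -mulr_sumr sumrB s0 s1 subrr mulr0 addr0.
Qed.

Lemma vt0 (R : realType) (S : finType) (vl0 vl1 : S -> S -> R) : vt vl0 vl1 0 = vl0.
Proof. by apply/funext => a; apply/funext => b; rewrite /vt mul0r addr0. Qed.

Lemma vt1 (R : realType) (S : finType) (vl0 vl1 : S -> S -> R) : vt vl0 vl1 1 = vl1.
Proof. by apply/funext => a; apply/funext => b; rewrite /vt mul1r addrC subrK. Qed.

Lemma gp_exists (R : realType) (S : finType) (E : rel S) (sfin sfail : S) :
  (forall s, ~~ is_target sfin sfail s -> #|[set t | E s t]| = 2%N) ->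
  exists val : S -> S -> R, graph_preserving E sfin sfail val.
Proof.
move=> h2; exists (fun s t => if E s t then 2^-1 else 0) => s nt; split.
- by move=> t ->; rewrite invr_gt0 ltr0n.
- by move=> t /negbTE ->.
- rewrite -big_mkcond /= sumr_const.
  have -> : #|[pred t | E s t]| = 2%N by rewrite -(h2 s nt) cardsE.
  by rewrite -[2^-1 *+ 2]mulr_natr mulVf // pnatr_eq0.
Qed.

Lemma rw_notconn (R : realType) (S : finType) (E : rel S) (sfin sfail : S) (val : S -> S -> R) :
  graph_preserving E sfin sfail val ->
  forall k s, ~~ connect E s sfin -> reach_within sfin sfail val k s = 0.
Proof.
move=> gp; elim=> [|k IH] s nc /=.
  by case: ifP => // /eqP e; move: nc; rewrite e connect0.
case: ifP => [/eqP e|hfin]; first by move: nc; rewrite e connect0.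
case: ifP => // hfail.
have nt : ~~ is_target sfin sfail s by rewrite /is_target hfin hfail.
apply: big1 => t _; case: (boolP (E s t)) => et.
  rewrite IH ?mulr0 //; apply/negP => ct; move/negP: nc; apply.
  exact: connect_trans (connect1 et) ct.
by have [_ h0 _] := gp s nt; rewrite h0 ?mul0r.
Qed.

Lemma conn_all (R : realType) (S : finType) (E : rel S) (sfin sfail : S) :
  sfin != sfail ->
  (forall u, @mc_equiv R S E sfin sfail u sfail -> u = sfail) ->
  forall s, s != sfail -> connect E s sfin.
Proof.
move=> ff hf s sf; apply/contraT => nc.
suff e : s = sfail by rewrite e eqxx in sf.
apply: hf => val gp; rewrite Pval_fail // /Pval.
have -> : (fun k => reach_within sfin sfail val k s) = (fun _ => 0).
  by apply/funext => k; apply: (rw_notconn gp).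
exact: lim_cst.
Qed.

Lemma step (R : realType) (S : finType) (E : rel S) (sfin sfail : S) :
  sfin != sfail ->
  (forall s, s != sfail -> connect E s sfin) ->
  (forall s, ~~ is_target sfin sfail s -> #|[set t | E s t]| = 2%N) ->
  forall L : seq (S * S), (forall p, p \in L -> ~ @mc_equiv R S E sfin sfail p.1 p.2) ->
  exists val : S -> S -> R, graph_preserving E sfin sfail val /\
    forall p, p \in L -> Pval sfin sfail val p.1 != Pval sfin sfail val p.2.
Proof.
move=> ff conn h2; elim=> [|[u v] L IH] hL.
  by have [val g] := gp_exists R h2; exists val; split.
have [vl0 [g0 h0]] : exists vl0 : S -> S -> R, graph_preserving E sfin sfail vl0 /\
    forall p, p \in L -> Pval sfin sfail vl0 p.1 != Pval sfin sfail vl0 p.2.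
  by apply: IH => p pL; apply: hL; rewrite in_cons pL orbT.
have [vl1 [g1 h1]] : exists vl1 : S -> S -> R, graph_preserving E sfin sfail vl1 /\
    Pval sfin sfail vl1 u != Pval sfin sfail vl1 v.
  case: (pselect (exists vl1 : S -> S -> R, graph_preserving E sfin sfail vl1 /\
    Pval sfin sfail vl1 u != Pval sfin sfail vl1 v)) => // H; exfalso.
  apply: (hL (u, v)); first by rewrite mem_head.
  move=> vl g /=; apply/eqP; apply/negP => ne; apply: H; exists vl; split => //.
  by apply/negP.
pose g (p : S * S) := qpol sfin sfail vl0 vl1 p.1 - qpol sfin sfail vl0 vl1 p.2.
have gt (t : R) : 0 <= t <= 1 -> forall p, ((g p).[t] != 0) =
    (Pval sfin sfail (vt vl0 vl1 t) p.1 != Pval sfin sfail (vt vl0 vl1 t) p.2).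
  move=> t01 p; have [dn0 hq] := key ff conn (gp_vt g0 g1 t01).
  rewrite /g hornerD hornerN -!hq -mulrBl mulf_eq0 negb_or dn0 andbT.
  by rewrite subr_eq0.
pose G := \prod_(p <- (u, v) :: L) g p.
have GN0 : G != 0.
  rewrite prodf_seq_neq0; apply/allP => p /=; rewrite in_cons => /orP [/eqP ->|pL].
    apply/negP => /eqP g0'; have := gt 1; rewrite ler01 lexx => /(_ isT (u, v)).
    by rewrite g0' horner0 eqxx vt1 /= h1.
  apply/negP => /eqP g0'; have := gt 0; rewrite ler01 lexx => /(_ isT p).
  by rewrite g0' horner0 eqxx vt0 h0.
pose rs := [seq ((k.+1)%:R : R)^-1 | k <- iota 0 (size G)].
have urs : uniq rs.
  rewrite map_inj_uniq ?iota_uniq // => a b /invr_inj /eqP.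
  by rewrite eqr_nat => /eqP [].
have : ~~ all (root G) rs.
  apply/negP => al; have := max_poly_roots GN0 al urs.
  by rewrite size_map size_iota ltnn.
case/allPn => t /mapP [k _ ->] nr.
have t01 : 0 <= (k.+1%:R : R)^-1 <= 1.
  by rewrite invr_ge0 ler0n /= invf_le1 ?ltr0n // ler1n.
exists (vt vl0 vl1 (k.+1%:R)^-1); split; first exact: gp_vt.
move=> p pL; rewrite -gt //.
move: nr; rewrite /root /G horner_prod -/(_ != 0) prodf_seq_neq0.
by move/allP => /(_ p pL).
Qed.

Unset Implicit Arguments.
Theorem lemma20 (R : realType) (S : finType) (E : rel S) (sfin sfail : S) :
  sfin != sfail ->
  (* targets have no outgoing edges *)
  (forall t, ~~ E sfin t) -> (forall t, ~~ E sfail t) ->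
  (* no self-loops *)
  (forall s, ~~ E s s) ->
  (* every non-target state has exactly two successors *)
  (forall s, ~~ is_target sfin sfail s -> #|[set t | E s t]| = 2%N) ->
  (* the classes of fin and fail are singletons *)
  (forall u, @mc_equiv R S E sfin sfail u sfin -> u = sfin) ->
  (forall u, @mc_equiv R S E sfin sfail u sfail -> u = sfail) ->
  exists val : S -> S -> R,
    @graph_preserving R S E sfin sfail val /\
    forall u v, @Pval R S sfin sfail val u = @Pval R S sfin sfail val v <->
                @mc_equiv R S E sfin sfail u v.
Proof.
move=> ff _ _ _ h2 _ hfail.
have conn := conn_all ff hfail.
pose L := [seq p <- enum {: S * S} | `[< ~ @mc_equiv R S E sfin sfail p.1 p.2 >]].
have [|val [g h]] := @step R S E sfin sfail ff conn h2 L.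
  by move=> p; rewrite mem_filter => /andP [/asboolP].
exists val; split => // u v; split; last by move=> /(_ val g).
move=> e; apply: contrapT => ne.
have : (u, v) \in L by rewrite mem_filter mem_enum andbT; apply/asboolP.
by move/h => /=; rewrite e eqxx.
Qed.
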